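(* Let $\mathcal{M}$ be a Ptolemy Möbius structure on a set $X$. Then there exists a bounded metric $d\in\mathcal{M}$, i.e. $d\in\mathcal{M}$ with $\Omega(d)=\emptyset$ and $\sup_{x,y\in X}d(x,y)<\infty$.
   Context: An extended metric on a set $X$ (with at least two points) is a map $d:X\times X\to[0,\infty]$ such that for some subset $\Omega(d)\subset X$ with at most one element, $d$ is a finite metric on $X\setminus\Omega(d)$, $d(x,\omega)=\infty$ for $x\notin\Omega(d)$, $\omega\in\Omega(d)$, and $d(\omega,\omega)=0$ ($\omega$ is written $\infty$). A quadruple is admissible if no entry occurs three or four times. $\mathrm{crt}(x,y,z,w)=(d(x,y)d(z,w):d(x,z)d(y,w):d(x,w)d(y,z))\in\mathbb{R}P^2$, with $\mathrm{crt}(x,y,z,\infty)=(d(x,y):d(x,z):d(y,z))$ and $\mathrm{crt}(x,y,\infty,\infty)=(0:1:1)$ (analogously for other positions). Extended metrics are Möbius equivalent if they have the same $\mathrm{crt}$ on all admissible quadruples; a Möbius structure is a nonempty, maximal set of pairwise Möbius equivalent extended metrics on $X$. A Möbius structure is Ptolemy if its metrics satisfy $d(x,y)d(z,w)\le d(x,z)d(y,w)+d(x,w)d(y,z)$ for all quadruples (equivalently the entries of every $\mathrm{crt}$ satisfy the triangle inequality). *)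

(* Defs.v *)
From Stdlib Require Import Reals.
Open Scope R_scope.

(* A value in [0, oo]: [Some r] is the finite value r, [None] is oo. *)
Definition ext := option R.

Section MoebiusDefs.
Variable X : Type.

Definition ext_metric (d : X -> X -> ext) : Prop :=
  exists Omega : X -> Prop,
    (forall a b, Omega a -> Omega b -> a = b) /\
    (forall x y, ~ Omega x -> ~ Omega y ->
       exists r, d x y = Some r /\ 0 <= r) /\
    (forall x y r, ~ Omega x -> ~ Omega y -> d x y = Some r -> (r = 0 <-> x = y)) /\
    (forall x y, ~ Omega x -> ~ Omega y -> d x y = d y x) /\
    (forall x y z rxy ryz rxz, ~ Omega x -> ~ Omega y -> ~ Omega z ->
       d x y = Some rxy -> d y z = Some ryz -> d x z = Some rxz ->
       rxz <= rxy + ryz) /\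
    (forall x w, ~ Omega x -> Omega w -> d x w = None /\ d w x = None) /\
    (forall w, Omega w -> d w w = Some 0).

(* Bookkeeping for products of extended distances: a product is r * oo^k. *)
Definition inf_ord (v : ext) : nat := match v with None => 1%nat | Some _ => 0%nat end.
Definition fin_part (v : ext) : R := match v with None => 1 | Some r => r end.

(* Normalized representative of the projective triple obtained from the three
   products a,b,c by dividing by the highest power of oo occurring. *)
Definition normalize3 (ka kb kc : nat) (a b c : R) : R * R * R :=
  let K := Nat.max ka (Nat.max kb kc) in
  ((if Nat.eqb ka K then a else 0),
   (if Nat.eqb kb K then b else 0),
   (if Nat.eqb kc K then c else 0)).

(* crt(x,y,z,w) = (d(x,y)d(z,w) : d(x,z)d(y,w) : d(x,w)d(y,z)), with the
   conventions for oo (these reproduce crt(x,y,z,oo) = (d(x,y):d(x,z):d(y,z))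
   and crt(x,y,oo,oo) = (0:1:1), etc.). *)
Definition crt_rep (d : X -> X -> ext) (x y z w : X) : R * R * R :=
  normalize3
    (inf_ord (d x y) + inf_ord (d z w))
    (inf_ord (d x z) + inf_ord (d y w))
    (inf_ord (d x w) + inf_ord (d y z))
    (fin_part (d x y) * fin_part (d z w))
    (fin_part (d x z) * fin_part (d y w))
    (fin_part (d x w) * fin_part (d y z)).

Definition proj_eq (p q : R * R * R) : Prop :=
  match p, q with
  | (a, b, c), (a', b', c') => exists l, l <> 0 /\ a' = l * a /\ b' = l * b /\ c' = l * c
  end.

Definition admissible (x y z w : X) : Prop :=
  ~ (x = y /\ y = z) /\ ~ (x = y /\ y = w) /\ ~ (x = z /\ z = w) /\ ~ (y = z /\ z = w).

Definition moebius_equiv (d1 d2 : X -> X -> ext) : Prop :=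
  forall x y z w, admissible x y z w -> proj_eq (crt_rep d1 x y z w) (crt_rep d2 x y z w).

Definition moebius_structure (M : (X -> X -> ext) -> Prop) : Prop :=
  (exists d, M d) /\
  (forall d, M d -> ext_metric d) /\
  (forall d1 d2, M d1 -> M d2 -> moebius_equiv d1 d2) /\
  (forall d, ext_metric d -> (forall d', M d' -> moebius_equiv d d') -> M d).

Definition ptolemy_metric (d : X -> X -> ext) : Prop :=
  forall x y z w, admissible x y z w ->
    match crt_rep d x y z w with
    | (a, b, c) => a <= b + c /\ b <= a + c /\ c <= a + b
    end.

Definition ptolemy_structure (M : (X -> X -> ext) -> Prop) : Prop :=
  moebius_structure M /\ forall d, M d -> ptolemy_metric d.

End MoebiusDefs.

(* Main.v *)
Require Import Defs.
From Stdlib Require Import Reals Lra Classical.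
Open Scope R_scope.

Definition EMO (X : Type) (d : X -> X -> ext) (Omega : X -> Prop) : Prop :=
    (forall a b, Omega a -> Omega b -> a = b) /\
    (forall x y, ~ Omega x -> ~ Omega y ->
       exists r, d x y = Some r /\ 0 <= r) /\
    (forall x y r, ~ Omega x -> ~ Omega y -> d x y = Some r -> (r = 0 <-> x = y)) /\
    (forall x y, ~ Omega x -> ~ Omega y -> d x y = d y x) /\
    (forall x y z rxy ryz rxz, ~ Omega x -> ~ Omega y -> ~ Omega z ->
       d x y = Some rxy -> d y z = Some ryz -> d x z = Some rxz ->
       rxz <= rxy + ryz) /\
    (forall x w, ~ Omega x -> Omega w -> d x w = None /\ d w x = None) /\
    (forall w, Omega w -> d w w = Some 0).

Lemma nn X d Om (E : EMO X d Om) u v : ~ Om u -> ~ Om v -> exists r, d u v = Some r /\ 0 <= r.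
Proof. destruct E as (_ & H & _). auto. Qed.
Lemma no X d Om (E : EMO X d Om) u v : ~ Om u -> Om v -> d u v = None.
Proof. destruct E as (_ & _ & _ & _ & _ & H & _). intros a b; apply (H u v a b). Qed.
Lemma on X d Om (E : EMO X d Om) u v : Om u -> ~ Om v -> d u v = None.
Proof. destruct E as (_ & _ & _ & _ & _ & H & _). intros a b; apply (H v u b a). Qed.
Lemma oo X d Om (E : EMO X d Om) u v : Om u -> Om v -> d u v = Some 0.
Proof. destruct E as (U & _ & _ & _ & _ & _ & H). intros a b.
  rewrite (U u v a b). apply H; rewrite <- (U u v a b); auto. Qed.

Ltac rwd d Om E :=
  repeat match goal with
  | Hu : ~ Om ?u, Hv : ~ Om ?v |- context [d ?u ?v] =>
      let r := fresh "r" in let Hr := fresh "Hr" in let H0 := fresh "Hpos" in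
      destruct (nn _ _ _ E u v Hu Hv) as (r & Hr & H0); rewrite Hr in *; clear Hr
  | Hu : ~ Om ?u, Hv : ~ Om ?v, HH : context [d ?u ?v] |- _ =>
      let r := fresh "r" in let Hr := fresh "Hr" in let H0 := fresh "Hpos" in
      destruct (nn _ _ _ E u v Hu Hv) as (r & Hr & H0); rewrite Hr in *; clear Hr
  | Hu : ~ Om ?u, Hv : Om ?v |- context [d ?u ?v] =>
      let Hr := fresh "Hr" in pose proof (no _ _ _ E u v Hu Hv) as Hr; rewrite Hr in *; clear Hr
  | Hu : ~ Om ?u, Hv : Om ?v, HH : context [d ?u ?v] |- _ =>
      let Hr := fresh "Hr" in pose proof (no _ _ _ E u v Hu Hv) as Hr; rewrite Hr in *; clear Hr
  | Hu : Om ?u, Hv : ~ Om ?v |- context [d ?u ?v] =>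
      let Hr := fresh "Hr" in pose proof (on _ _ _ E u v Hu Hv) as Hr; rewrite Hr in *; clear Hr
  | Hu : Om ?u, Hv : ~ Om ?v, HH : context [d ?u ?v] |- _ =>
      let Hr := fresh "Hr" in pose proof (on _ _ _ E u v Hu Hv) as Hr; rewrite Hr in *; clear Hr
  | Hu : Om ?u, Hv : Om ?v |- context [d ?u ?v] =>
      let Hr := fresh "Hr" in pose proof (oo _ _ _ E u v Hu Hv) as Hr; rewrite Hr in *; clear Hr
  | Hu : Om ?u, Hv : Om ?v, HH : context [d ?u ?v] |- _ =>
      let Hr := fresh "Hr" in pose proof (oo _ _ _ E u v Hu Hv) as Hr; rewrite Hr in *; clear Hr
  end.

Ltac cases Om x := destruct (classic (Om x)).

Lemma crt_scale X d Om (E : EMO X d Om) (h : X -> R) (hp : forall u, 0 < h u) x y z w :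
  proj_eq (crt_rep X d x y z w)
          (crt_rep X (fun u v => Some (fin_part (d u v) * h u * h v)) x y z w).
Proof.
  unfold crt_rep, normalize3.
  pose proof (hp x); pose proof (hp y); pose proof (hp z); pose proof (hp w).
  cases Om x; cases Om y; cases Om z; cases Om w; rwd d Om E; simpl;
  exists (h x * h y * h z * h w);
  (split; [apply Rgt_not_eq; repeat apply Rmult_lt_0_compat; assumption
          | repeat split; ring]).
Qed.
Lemma fin_nonneg X d Om (E : EMO X d Om) u v : 0 <= fin_part (d u v).
Proof. cases Om u; cases Om v; rwd d Om E; simpl; lra. Qed.

Lemma fin_sym X d Om (E : EMO X d Om) u v : fin_part (d u v) = fin_part (d v u).
Proof.
  cases Om u; cases Om v; try (rwd d Om E; reflexivity).
  destruct E as (_ & _ & _ & S & _). rewrite S; auto.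
Qed.

Lemma fin_self X d Om (E : EMO X d Om) u : ~ Om u -> fin_part (d u u) = 0.
Proof.
  intro Hu. destruct (nn _ _ _ E u u Hu Hu) as (r & Hr & _). rewrite Hr; simpl.
  destruct E as (_ & _ & Z & _). apply (Z u u r Hu Hu Hr). reflexivity.
Qed.

Lemma tri_fin X d Om (E : EMO X d Om) x y z : ~ Om x -> ~ Om y -> ~ Om z ->
  fin_part (d x z) <= fin_part (d x y) + fin_part (d y z).
Proof.
  intros Hx Hy Hz.
  destruct (nn _ _ _ E x y Hx Hy) as (a & Ha & _).
  destruct (nn _ _ _ E y z Hy Hz) as (b & Hb & _).
  destruct (nn _ _ _ E x z Hx Hz) as (c & Hc & _).
  rewrite Ha, Hb, Hc; simpl.
  destruct E as (_ & _ & _ & _ & T & _). exact (T x y z a b c Hx Hy Hz Ha Hb Hc).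
Qed.

Lemma ptol_fin X d Om (E : EMO X d Om) (P : ptolemy_metric X d) x y z o :
  ~ Om x -> ~ Om y -> ~ Om z -> ~ Om o ->
  fin_part (d x z) * fin_part (d y o) <=
  fin_part (d x y) * fin_part (d z o) + fin_part (d x o) * fin_part (d y z).
Proof.
  intros Hx Hy Hz Ho.
  pose proof (fin_nonneg _ _ _ E x y). pose proof (fin_nonneg _ _ _ E z o).
  pose proof (fin_nonneg _ _ _ E x o). pose proof (fin_nonneg _ _ _ E y z).
  pose proof (fin_nonneg _ _ _ E x z). pose proof (fin_nonneg _ _ _ E y o).
  destruct (classic (admissible X x z y o)) as [A|A].
  - pose proof (P x z y o A) as Q. rewrite (fin_sym _ _ _ E y z).
    unfold crt_rep, normalize3 in Q.
    destruct (nn _ _ _ E x z Hx Hz) as (r1 & E1 & _); rewrite E1 in *.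
    destruct (nn _ _ _ E y o Hy Ho) as (r2 & E2 & _); rewrite E2 in *.
    destruct (nn _ _ _ E x y Hx Hy) as (r3 & E3 & _); rewrite E3 in *.
    destruct (nn _ _ _ E z o Hz Ho) as (r4 & E4 & _); rewrite E4 in *.
    destruct (nn _ _ _ E x o Hx Ho) as (r5 & E5 & _); rewrite E5 in *.
    destruct (nn _ _ _ E z y Hz Hy) as (r6 & E6 & _); rewrite E6 in *.
    simpl in *. lra.
  - unfold admissible in A.
    destruct (classic (x = z /\ z = y)) as [[-> ->]|N1].
    { rewrite (fin_self _ _ _ E y Hy). nra. }
    destruct (classic (x = z /\ z = o)) as [[-> ->]|N2].
    { rewrite (fin_self _ _ _ E o Ho). nra. }
    destruct (classic (x = y /\ y = o)) as [[-> ->]|N3].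
    { rewrite (fin_self _ _ _ E o Ho). nra. }
    destruct (classic (z = y /\ y = o)) as [[-> ->]|N4].
    { rewrite (fin_self _ _ _ E o Ho). nra. }
    exfalso; apply A; tauto.
Qed.

Definition hf X (d : X -> X -> ext) (o u : X) : R :=
  match d u o with Some r => / (1 + r) | None => 1 end.
Definition ddv X d o u v := fin_part (d u v) * hf X d o u * hf X d o v.

Lemma hf_pos X d Om (E : EMO X d Om) o u : ~ Om o -> 0 < hf X d o u.
Proof. intro Ho; unfold hf; cases Om u; rwd d Om E; try lra.
  apply Rinv_0_lt_compat; lra. Qed.

Lemma arith1 a b c p q s : 0 <= a -> 0 <= b -> 0 <= c -> 0 <= p -> 0 <= q -> 0 <= s ->
  c * q <= a * s + p * b -> c <= a + b ->
  c * / (1 + p) * / (1 + s) <= a * / (1 + p) * / (1 + q) + b * / (1 + q) * / (1 + s).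
Proof.
  intros.
  assert (Hd : a * / (1 + p) * / (1 + q) + b * / (1 + q) * / (1 + s) - c * / (1 + p) * / (1 + s)
     = (a * (1 + s) + b * (1 + p) - c * (1 + q)) * / ((1+p)*(1+q)*(1+s))) by (field; lra).
  assert (0 <= (a * (1 + s) + b * (1 + p) - c * (1 + q)) * / ((1+p)*(1+q)*(1+s))).
  { apply Rmult_le_pos; [lra|]. left; apply Rinv_0_lt_compat. repeat apply Rmult_lt_0_compat; lra. }
  lra.
Qed.

Lemma arith2 b q s : 0 <= b -> 0 <= q -> 0 <= s -> q <= s + b ->
  / (1 + s) <= / (1 + q) + b * / (1 + q) * / (1 + s).
Proof.
  intros.
  assert (Hd : / (1 + q) + b * / (1 + q) * / (1 + s) - / (1 + s)
     = ((1 + s) + b - (1 + q)) * / ((1+q)*(1+s))) by (field; lra).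
  assert (0 <= ((1 + s) + b - (1 + q)) * / ((1+q)*(1+s))).
  { apply Rmult_le_pos; [lra|]. left; apply Rinv_0_lt_compat. repeat apply Rmult_lt_0_compat; lra. }
  lra.
Qed.

Lemma arith3 c p s : 0 <= c -> 0 <= p -> 0 <= s -> c <= p + s ->
  c * / (1 + p) * / (1 + s) <= / (1 + p) + / (1 + s).
Proof.
  intros.
  assert (Hd : / (1 + p) + / (1 + s) - c * / (1 + p) * / (1 + s)
     = ((1 + s) + (1 + p) - c) * / ((1+p)*(1+s))) by (field; lra).
  assert (0 <= ((1 + s) + (1 + p) - c) * / ((1+p)*(1+s))).
  { apply Rmult_le_pos; [lra|]. left; apply Rinv_0_lt_compat. repeat apply Rmult_lt_0_compat; lra. }
  lra.
Qed.
Lemma hf_n X d Om (E : EMO X d Om) o u : ~ Om o -> ~ Om u -> hf X d o u = / (1 + fin_part (d u o)).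
Proof. intros Ho Hu; unfold hf. destruct (nn _ _ _ E u o Hu Ho) as (r & -> & _). reflexivity. Qed.
Lemma hf_o X d Om (E : EMO X d Om) o u : ~ Om o -> Om u -> hf X d o u = 1.
Proof. intros Ho Hu; unfold hf. rewrite (on _ _ _ E u o Hu Ho). reflexivity. Qed.

Lemma ddv_tri X d Om (E : EMO X d Om) (P : ptolemy_metric X d) o x y z : ~ Om o ->
  ddv X d o x z <= ddv X d o x y + ddv X d o y z.
Proof.
  intro Ho. unfold ddv.
  pose proof (fin_nonneg _ _ _ E x y). pose proof (fin_nonneg _ _ _ E z o).
  pose proof (fin_nonneg _ _ _ E x o). pose proof (fin_nonneg _ _ _ E y z).
  pose proof (fin_nonneg _ _ _ E x z). pose proof (fin_nonneg _ _ _ E y o).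
  pose proof (hf_pos _ _ _ E o x Ho). pose proof (hf_pos _ _ _ E o y Ho).
  pose proof (hf_pos _ _ _ E o z Ho).
  cases Om x; cases Om y; cases Om z.
  - rewrite (oo _ _ _ E x z), (oo _ _ _ E x y), (oo _ _ _ E y z) by assumption; simpl. lra.
  - rewrite (oo _ _ _ E x y), (on _ _ _ E x z), (on _ _ _ E y z) by assumption; simpl.
    rewrite (hf_o _ _ _ E o x), (hf_o _ _ _ E o y) by assumption. lra.
  - rewrite (oo _ _ _ E x z), (on _ _ _ E x y), (no _ _ _ E y z) by assumption; simpl.
    nra.
  - rewrite (on _ _ _ E x z), (on _ _ _ E x y) by assumption; simpl.
    rewrite (hf_o _ _ _ E o x), (hf_n _ _ _ E o y), (hf_n _ _ _ E o z) by assumption.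
    pose proof (tri_fin _ _ _ E y z o H9 H10 Ho).
    rewrite !Rmult_1_l. apply arith2; auto; lra.
  - rewrite (no _ _ _ E x z), (no _ _ _ E x y), (oo _ _ _ E y z) by assumption; simpl.
    rewrite (hf_o _ _ _ E o y), (hf_o _ _ _ E o z) by assumption. lra.
  - rewrite (no _ _ _ E x y), (on _ _ _ E y z) by assumption; simpl.
    rewrite (hf_o _ _ _ E o y), (hf_n _ _ _ E o x), (hf_n _ _ _ E o z) by assumption.
    pose proof (tri_fin _ _ _ E x o z H8 Ho H10).
    rewrite (fin_sym _ _ _ E o z) in H11.
    rewrite !Rmult_1_r, !Rmult_1_l. apply arith3; auto; lra.
  - rewrite (no _ _ _ E x z), (no _ _ _ E y z) by assumption; simpl.
    rewrite (hf_o _ _ _ E o z), (hf_n _ _ _ E o x), (hf_n _ _ _ E o y) by assumption.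
    pose proof (tri_fin _ _ _ E y x o H9 H8 Ho).
    rewrite (fin_sym _ _ _ E y x) in H11.
    rewrite !Rmult_1_r, !Rmult_1_l.
    pose proof (arith2 (fin_part (d x y)) (fin_part (d y o)) (fin_part (d x o))) as A.
    rewrite (Rmult_comm (fin_part (d x y) * _)), <- Rmult_assoc in A. lra.
  - rewrite (hf_n _ _ _ E o x), (hf_n _ _ _ E o y), (hf_n _ _ _ E o z) by assumption.
    pose proof (tri_fin _ _ _ E x y z H8 H9 H10).
    pose proof (ptol_fin _ _ _ E P x y z o H8 H9 H10 Ho).
    apply arith1; auto; lra.
Qed.
Lemma proj_eq_sym p q : proj_eq p q -> proj_eq q p.
Proof.
  destruct p as [[a b] c], q as [[a' b'] c']; simpl.
  intros (l & Hl & -> & -> & ->). exists (/ l). repeat split.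
  - apply Rinv_neq_0_compat; auto.
  - field; auto. - field; auto. - field; auto.
Qed.

Lemma proj_eq_trans p q s : proj_eq p q -> proj_eq q s -> proj_eq p s.
Proof.
  destruct p as [[a b] c], q as [[a' b'] c'], s as [[a'' b''] c'']; simpl.
  intros (l & Hl & -> & -> & ->) (m & Hm & -> & -> & ->). exists (m * l). repeat split.
  - intro Z; apply Rmult_integral in Z; tauto.
  - ring. - ring. - ring.
Qed.

Lemma ddv_le1 X d Om (E : EMO X d Om) o u : ~ Om o -> ddv X d o u o <= 1.
Proof.
  intro Ho. unfold ddv.
  rewrite (hf_n _ _ _ E o o Ho Ho), (fin_self _ _ _ E o Ho).
  replace (/ (1 + 0)) with 1 by (field).
  cases Om u.
  - rewrite (on _ _ _ E u o H Ho), (hf_o _ _ _ E o u Ho H); simpl; lra.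
  - rewrite (hf_n _ _ _ E o u Ho H).
    pose proof (fin_nonneg _ _ _ E u o).
    assert (Hd : 1 - fin_part (d u o) * / (1 + fin_part (d u o)) * 1 = / (1 + fin_part (d u o)))
      by (field; lra).
    assert (0 < / (1 + fin_part (d u o))) by (apply Rinv_0_lt_compat; lra).
    lra.
Qed.

Lemma ddv_sym X d Om (E : EMO X d Om) o u v : ddv X d o u v = ddv X d o v u.
Proof. unfold ddv. rewrite (fin_sym _ _ _ E u v). ring. Qed.

Theorem lemma2p3 (X : Type) (two_pts : exists a b : X, a <> b)
  (M : (X -> X -> ext) -> Prop) (HM : ptolemy_structure X M) :
  exists d : X -> X -> ext,
    M d /\
    (* Omega(d) is empty: all distances are finite *)
    (forall x y : X, exists r : R, d x y = Some r) /\
    (* bounded *)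
    (exists B : R, forall (x y : X) (r : R), d x y = Some r -> r <= B).
Proof.
  destruct HM as [[[d Md] [Mem [Meq Mmax]]] Mpt].
  destruct (Mem d Md) as [Om E].
  pose proof (Mpt d Md) as P.
  assert (exists o, ~ Om o) as [o Ho].
  { destruct two_pts as (a & b & hab). destruct (classic (Om a)) as [Ha|Ha]; eauto.
    exists b; intro Hb. apply hab. destruct E as (U & _). auto. }
  exists (fun u v => Some (ddv X d o u v)).
  split; [|split].
  - apply Mmax.
    + exists (fun _ => False). split; [|split; [|split; [|split; [|split; [|split]]]]].
      * intros a b [].
      * intros x y _ _. exists (ddv X d o x y); split; auto.
        unfold ddv. pose proof (fin_nonneg _ _ _ E x y).
        pose proof (hf_pos _ _ _ E o x Ho). pose proof (hf_pos _ _ _ E o y Ho).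
        apply Rmult_le_pos; [apply Rmult_le_pos|]; lra.
      * intros x y r _ _ Hr. injection Hr as <-. unfold ddv.
        pose proof (hf_pos _ _ _ E o x Ho). pose proof (hf_pos _ _ _ E o y Ho).
        cases Om x; cases Om y.
        -- rewrite (oo _ _ _ E x y H1 H2). simpl. split; intros _; [|ring].
           destruct E as (U & _). auto.
        -- rewrite (on _ _ _ E x y H1 H2). simpl. split; intro Z.
           ++ exfalso. nra.
           ++ subst; tauto.
        -- rewrite (no _ _ _ E x y H1 H2). simpl. split; intro Z.
           ++ exfalso. nra.
           ++ subst; tauto.
        -- destruct (nn _ _ _ E x y H1 H2) as (s & Hs & _). rewrite Hs; simpl.
           destruct E as (_ & _ & Z & _). rewrite <- (Z x y s H1 H2 Hs).
           split; intro W.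
           ++ apply Rmult_integral in W as [W|W]; [|lra].
              apply Rmult_integral in W as [W|W]; lra.
           ++ rewrite W; ring.
      * intros x y _ _. f_equal. apply (ddv_sym _ _ _ E).
      * intros x y z rxy ryz rxz _ _ _ H1 H2 H3.
        injection H1 as <-. injection H2 as <-. injection H3 as <-.
        apply (ddv_tri _ _ _ E P o x y z Ho).
      * intros x w _ [].
      * intros w [].
    + intros d' Md'. intros x y z w A.
      eapply proj_eq_trans; [apply proj_eq_sym, (crt_scale _ _ _ E (hf X d o)) | apply Meq; auto].
      intro u; apply (hf_pos _ _ _ E o u Ho).
  - intros x y; eauto.
  - exists 2. intros x y r Hr. injection Hr as <-.
    pose proof (ddv_tri _ _ _ E P o x o y Ho).
    pose proof (ddv_le1 _ _ _ E o x Ho). pose proof (ddv_le1 _ _ _ E o y Ho).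
    rewrite (ddv_sym _ _ _ E o o y) in H. lra.
Qed.
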